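(* Let $(X,d,\alpha)$ be a computable metric space. Let $S$ be a compact subset of $(X,d)$ and suppose $A_1,\dots,A_n$ are subsets of $S$ such that $S=A_1\cup\dots\cup A_n$ and such that $A_i$ is computable up to $S$ for each $i\in\{1,\dots,n\}$. Then $S$ is a computable compact set.
   Context: A computable metric space is a triple $(X,d,\alpha)$ where $(X,d)$ is a metric space and $\alpha=(\alpha_i)_{i\in\mathbb N}$ is a sequence with dense range in $(X,d)$ such that $(i,j)\mapsto d(\alpha_i,\alpha_j)$ is a computable function $\mathbb N^2\to\mathbb R$ (a function $g:\mathbb N^k\to\mathbb R$ is computable if there is a computable $G:\mathbb N^{k+1}\to\mathbb Q$ with $|g(x)-G(x,i)|<2^{-i}$ for all $x,i$). Fix a computable $q:\mathbb N\to\mathbb Q$ whose image is the set of positive rationals and computable $\tau_1,\tau_2:\mathbb N\to\mathbb N$ with $\{(\tau_1(i),\tau_2(i)):i\in\mathbb N\}=\mathbb N^2$; let $\lambda_i=\alpha_{\tau_1(i)}$, $\rho_i=q_{\tau_2(i)}$, $I_i=B(\lambda_i,\rho_i)$ (open ball). Fix computable $\sigma:\mathbb N^2\to\mathbb N$, $\eta:\mathbb N\to\mathbb N$ such that $\{(\sigma(j,0),\dots,\sigma(j,\eta(j))):j\in\mathbb N\}$ is the set of all nonempty finite sequences in $\mathbb N$; let $[j]=\{\sigma(j,i):0\le i\le\eta(j)\}$, $J_j=\bigcup_{i\in[j]}I_i$ and $\Lambda_j=\{\alpha_i:i\in[j]\}$. A compact $K$ is a computable compact set if $\{j:K\subseteq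 J_j\}$ and $\{i:K\cap I_i\ne\emptyset\}$ are computably enumerable. For $A,B\subseteq X$ and $\varepsilon>0$ write $A\prec_\varepsilon B$ if for each $a\in A$ there is $b\in B$ with $d(a,b)<\varepsilon$. For $A\subseteq S\subseteq X$, $A$ is computable up to $S$ if there is a computable $f:\mathbb N\to\mathbb N$ with $A\prec_{2^{-k}}\Lambda_{f(k)}$ and $\Lambda_{f(k)}\prec_{2^{-k}}S$ for all $k\in\mathbb N$. *)

(* Defs.v *)
From Stdlib Require Import Reals QArith Qreals List Arith.
Import ListNotations.
Open Scope R_scope.

(* A concrete model of computability: (partial) mu-recursive programs. *)
Inductive prog : Type :=
| PZero : prog
| PSucc : prog
| PProj : nat -> prog
| PComp : prog -> list prog -> prog
| PRec  : prog -> prog -> prog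
| PMu   : prog -> prog.

Inductive eval : prog -> list nat -> nat -> Prop :=
| ev_zero : forall v, eval PZero v 0
| ev_succ : forall x v, eval PSucc (x :: v) (S x)
| ev_proj : forall i v, (i < length v)%nat -> eval (PProj i) v (nth i v 0%nat)
| ev_comp : forall f gs v ys y,
    Forall2 (fun g z => eval g v z) gs ys -> eval f ys y -> eval (PComp f gs) v y
| ev_rec0 : forall f g v y, eval f v y -> eval (PRec f g) (0%nat :: v) y
| ev_recS : forall f g n v z y,
    eval (PRec f g) (n :: v) z -> eval g (n :: z :: v) y ->
    eval (PRec f g) (S n :: v) y
| ev_mu : forall f v n,
    eval f (n :: v) 0 ->
    (forall m, (m < n)%nat -> exists k, eval f (m :: v) (S k)) ->
    eval (PMu f) v n.

Definition computable1 (f : nat -> nat) : Prop :=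
  exists p, forall x, eval p [x] (f x).
Definition computable2 (f : nat -> nat -> nat) : Prop :=
  exists p, forall x y, eval p [x; y] (f x y).
Definition computable3 (f : nat -> nat -> nat -> nat) : Prop :=
  exists p, forall x y z, eval p [x; y; z] (f x y z).

Definition c_e (A : nat -> Prop) : Prop :=
  exists p, forall x, A x <-> exists y, eval p [x] y.

(* Rationals are coded by triples (a,b,c) of naturals as (a - b)/(c+1). *)
Definition qcode (a b c : nat) : Q :=
  Qmake (Z.of_nat a - Z.of_nat b) (Pos.of_succ_nat c).

Definition computableQ1 (q : nat -> Q) : Prop :=
  exists a b c, computable1 a /\ computable1 b /\ computable1 c /\
    forall i, q i == qcode (a i) (b i) (c i).

Definition computableR2 (g : nat -> nat -> R) : Prop :=
  exists a b c, computable3 a /\ computable3 b /\ computable3 c /\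
    forall x y i, Rabs (g x y - Q2R (qcode (a x y i) (b x y i) (c x y i)))
                  < / 2 ^ i.

Definition is_metric {X : Type} (d : X -> X -> R) : Prop :=
  (forall x y, 0 <= d x y) /\
  (forall x y, d x y = 0 <-> x = y) /\
  (forall x y, d x y = d y x) /\
  (forall x y z, d x z <= d x y + d y z).

Definition ball {X : Type} (d : X -> X -> R) (x : X) (r : R) : X -> Prop :=
  fun y => d x y < r.

Definition is_open {X : Type} (d : X -> X -> R) (U : X -> Prop) : Prop :=
  forall x, U x -> exists r, 0 < r /\ forall y, ball d x r y -> U y.

Definition compact_set {X : Type} (d : X -> X -> R) (S : X -> Prop) : Prop :=
  forall (I : Type) (U : I -> X -> Prop),
    (forall i, is_open d (U i)) ->
    (forall x, S x -> exists i, U i x) ->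
    exists l : list I, forall x, S x -> exists i, In i l /\ U i x.

Definition computable_metric_space {X : Type} (d : X -> X -> R)
  (alpha : nat -> X) : Prop :=
  is_metric d /\
  (forall x eps, 0 < eps -> exists i, d x (alpha i) < eps) /\
  computableR2 (fun i j => d (alpha i) (alpha j)).

Definition enum_data (q : nat -> Q) (tau1 tau2 : nat -> nat)
  (sigma : nat -> nat -> nat) (eta : nat -> nat) : Prop :=
  computableQ1 q /\
  (forall i, 0 < q i)%Q /\
  (forall r : Q, (0 < r)%Q -> exists i, q i == r) /\
  computable1 tau1 /\ computable1 tau2 /\
  (forall a b, exists i, tau1 i = a /\ tau2 i = b) /\
  computable2 sigma /\ computable1 eta /\
  (forall l : list nat, l <> [] ->
     exists j, length l = S (eta j) /\
               forall i, (i < length l)%nat -> nth i l 0%nat = sigma j i).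

Section Notions.
Context {X : Type} (d : X -> X -> R) (alpha : nat -> X) (q : nat -> Q)
  (tau1 tau2 : nat -> nat) (sigma : nat -> nat -> nat) (eta : nat -> nat).

Definition lam (i : nat) : X := alpha (tau1 i).
Definition rho (i : nat) : R := Q2R (q (tau2 i)).
Definition Iball (i : nat) : X -> Prop := ball d (lam i) (rho i).
Definition idx (j : nat) : nat -> Prop :=
  fun m => exists i, (i <= eta j)%nat /\ sigma j i = m.
Definition Jset (j : nat) : X -> Prop :=
  fun x => exists m, idx j m /\ Iball m x.
Definition Lambda (j : nat) : X -> Prop :=
  fun x => exists m, idx j m /\ x = alpha m.

Definition computable_compact (K : X -> Prop) : Prop :=
  compact_set d K /\
  c_e (fun j => forall x, K x -> Jset j x) /\
  c_e (fun i => exists x, K x /\ Iball i x).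
End Notions.

Definition prec {X : Type} (d : X -> X -> R) (eps : R) (A B : X -> Prop) : Prop :=
  forall a, A a -> exists b, B b /\ d a b < eps.

Definition computable_up_to {X : Type} (d : X -> X -> R) (alpha : nat -> X)
  (sigma : nat -> nat -> nat) (eta : nat -> nat) (A S : X -> Prop) : Prop :=
  exists f : nat -> nat, computable1 f /\
    forall k, prec d (/ 2 ^ k) A (Lambda alpha sigma eta (f k)) /\
              prec d (/ 2 ^ k) (Lambda alpha sigma eta (f k)) S.

(* Main.v *)
Require Import Defs.
From Stdlib Require Import Reals QArith Qreals List Arith Lia Lra.
From Stdlib Require Import IndefiniteDescription.
Import ListNotations.
Open Scope nat_scope.

Lemma eval_det : forall p v y1, eval p v y1 -> forall y2, eval p v y2 -> y1 = y2.
Proof.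
  fix IH 4.
  intros p v y1 H.
  destruct H as [v|x v|i v Hi|f gs v ys y Hgs Hf|f g v y Hf|f g n v z y Hr Hg|f v n Hf Hlt];
    intros y2 H2.
  - inversion H2; reflexivity.
  - inversion H2; reflexivity.
  - inversion H2; reflexivity.
  - inversion H2 as [| | |f' gs' v' ys0 y0 Hgs0 Hf0| | |]; subst.
    assert (E : ys = ys0).
    { clear Hf Hf0 H2.
      revert ys0 Hgs0.
      revert gs ys Hgs.
      fix F 3.
      intros gs ys Hgs. destruct Hgs as [|g z gs ys Hgz Hrest]; intros ys0 H0.
      - inversion H0; reflexivity.
      - inversion H0 as [|g' z0 gs' ys1 Hgz0 Hrest0]; subst.
        f_equal.
        + exact (IH _ _ _ Hgz _ Hgz0).
        + exact (F _ _ Hrest _ Hrest0). }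
    subst. exact (IH _ _ _ Hf _ Hf0).
  - inversion H2 as [| | | |f' g' v' y0 Hf0| |]; subst.
    exact (IH _ _ _ Hf _ Hf0).
  - inversion H2 as [| | | | |f' g' n' v' z0 y0 Hr0 Hg0|]; subst.
    pose proof (IH _ _ _ Hr _ Hr0) as E. subst.
    exact (IH _ _ _ Hg _ Hg0).
  - inversion H2 as [| | | | | |f' v' n0 Hf0 Hlt0]; subst.
    destruct (Nat.lt_trichotomy n y2) as [Hc|[Hc|Hc]].
    + destruct (Hlt0 n Hc) as [k Hk].
      pose proof (IH _ _ _ Hf _ Hk). discriminate.
    + exact Hc.
    + destruct (Hlt y2 Hc) as [k Hk].
      pose proof (IH _ _ _ Hk _ Hf0). discriminate.
Qed.

Definition tc (k : nat) (f : list nat -> nat) : Prop :=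
  exists p, forall v, length v = k -> eval p v (f v).

Lemma tc_ext k f g : (forall v, length v = k -> f v = g v) -> tc k f -> tc k g.
Proof. intros H [p Hp]. exists p. intros v Hv. rewrite <- H by exact Hv. auto. Qed.

Lemma tc_zero k : tc k (fun _ => 0%nat).
Proof. exists PZero. intros; constructor. Qed.

Lemma tc_proj k i : (i < k)%nat -> tc k (fun v => nth i v 0%nat).
Proof. intros H. exists (PProj i). intros v Hv. constructor. lia. Qed.

Lemma tc_succ k g : tc k g -> tc k (fun v => S (g v)).
Proof.
  intros [p Hp]. exists (PComp PSucc [p]). intros v Hv.
  econstructor. constructor. apply Hp, Hv. constructor. constructor.
Qed.

Lemma tc_const k c : tc k (fun _ => c).
Proof. induction c. apply tc_zero. apply tc_succ, IHc. Qed.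

Lemma Forall_tc_progs k gs : Forall (tc k) gs ->
  exists ps, forall v, length v = k ->
    Forall2 (fun p z => eval p v z) ps (map (fun g => g v) gs).
Proof.
  induction 1 as [|g gs [p Hp] _ [ps Hps]].
  - exists []. intros; constructor.
  - exists (p :: ps). intros v Hv. simpl. constructor; auto.
Qed.

Lemma tc_comp k h gs : tc (length gs) h -> Forall (tc k) gs ->
  tc k (fun v => h (map (fun g => g v) gs)).
Proof.
  intros [ph Hh] Hgs. destruct (Forall_tc_progs _ _ Hgs) as [ps Hps].
  exists (PComp ph ps). intros v Hv. econstructor. apply Hps, Hv.
  apply Hh. apply length_map.
Qed.

Lemma tc_app1 k h g : tc 1 h -> tc k g -> tc k (fun v => h [g v]).
Proof. intros Hh Hg. apply (tc_comp k h [g]); auto. Qed.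
Lemma tc_app2 k h g1 g2 : tc 2 h -> tc k g1 -> tc k g2 -> tc k (fun v => h [g1 v; g2 v]).
Proof. intros Hh H1 H2. apply (tc_comp k h [g1; g2]); auto. Qed.
Lemma tc_app3 k h g1 g2 g3 : tc 3 h -> tc k g1 -> tc k g2 -> tc k g3 ->
  tc k (fun v => h [g1 v; g2 v; g3 v]).
Proof. intros Hh H1 H2 H3. apply (tc_comp k h [g1; g2; g3]); auto. Qed.

Lemma map_nth_app : forall w l,
  map (fun i => nth i (l ++ w) 0%nat) (seq (length l) (length w)) = w.
Proof.
  induction w as [|a w IH]; intros l; simpl; [reflexivity|].
  f_equal.
  - rewrite app_nth2 by lia. rewrite Nat.sub_diag. reflexivity.
  - specialize (IH (l ++ [a])). rewrite <- app_assoc in IH. simpl in IH.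
    rewrite length_app in IH. simpl in IH. rewrite Nat.add_1_r in IH. exact IH.
Qed.

Lemma Forall_projs k off : Forall (tc (off + k)) (map (fun i v => nth i v 0%nat) (seq off k)).
Proof.
  apply Forall_forall. intros g Hg. apply in_map_iff in Hg as [i [<- Hi]].
  apply in_seq in Hi. apply tc_proj. lia.
Qed.

Lemma tc_subst1 k h e : tc (S k) h -> tc k e -> tc k (fun v => h (e v :: v)).
Proof.
  intros Hh He.
  assert (H := tc_comp k h (e :: map (fun i v => nth i v 0%nat) (seq 0 k))).
  simpl in H. rewrite length_map, length_seq in H.
  specialize (H Hh (Forall_cons _ He (Forall_projs k 0))).
  eapply tc_ext; [|exact H]. intros v Hv. simpl. rewrite map_map.
  f_equal. f_equal. rewrite <- Hv. apply (map_nth_app v []).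
Qed.

Definition primrec (f g : list nat -> nat) (v : list nat) : nat :=
  match v with
  | [] => 0%nat
  | n :: w => nat_rect (fun _ => nat) (f w) (fun i z => g (i :: z :: w)) n
  end.

Lemma tc_rec k f g : tc k f -> tc (S (S k)) g -> tc (S k) (primrec f g).
Proof.
  intros [pf Hf] [pg Hg]. exists (PRec pf pg). intros v Hv.
  destruct v as [|n w]; [discriminate|]. simpl in Hv. injection Hv as Hv. simpl.
  induction n as [|n IH]; simpl.
  - constructor. auto.
  - econstructor. exact IH. apply Hg. simpl. lia.
Qed.

Definition n0 v := nth 0 v 0%nat.
Definition n1 v := nth 1 v 0%nat.

Lemma tc_add : tc 2 (fun v => n0 v + n1 v)%nat.
Proof.
  assert (H : tc 2 (primrec (fun w => n0 w) (fun v => S (n1 v)))).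
  { apply tc_rec. apply tc_proj; lia. apply tc_succ, tc_proj; lia. }
  eapply tc_ext; [|exact H]. intros v Hv.
  destruct v as [|n [|m [|]]]; try discriminate. unfold n0, n1; simpl. clear Hv H.
  induction n; simpl; auto.
Qed.

Lemma tc_mul : tc 2 (fun v => n0 v * n1 v)%nat.
Proof.
  assert (H : tc 2 (primrec (fun w => 0%nat) (fun v => (nth 1 v 0 + nth 2 v 0)%nat))).
  { apply tc_rec. apply tc_zero.
    eapply tc_ext; [|apply (tc_app2 3 _ _ _ tc_add (tc_proj 3 1 ltac:(lia)) (tc_proj 3 2 ltac:(lia)))].
    intros; reflexivity. }
  eapply tc_ext; [|exact H]. intros v Hv.
  destruct v as [|n [|m [|]]]; try discriminate. unfold n0, n1; simpl. clear Hv H.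
  induction n; simpl; auto. rewrite IHn. lia.
Qed.

Lemma tc_pow2 : tc 1 (fun v => 2 ^ n0 v)%nat.
Proof.
  assert (H : tc 1 (primrec (fun w => 1%nat) (fun v => (nth 1 v 0 + nth 1 v 0)%nat))).
  { apply tc_rec. apply tc_const.
    eapply tc_ext; [|apply (tc_app2 2 _ _ _ tc_add (tc_proj 2 1 ltac:(lia)) (tc_proj 2 1 ltac:(lia)))].
    intros; reflexivity. }
  eapply tc_ext; [|exact H]. intros v Hv.
  destruct v as [|n [|]]; try discriminate. unfold n0; simpl. clear Hv H.
  induction n; simpl; auto. rewrite IHn. lia.
Qed.

Lemma tc_pred : tc 1 (fun v => pred (n0 v)).
Proof.
  assert (H : tc 1 (primrec (fun w => 0%nat) (fun v => nth 0 v 0%nat))).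
  { apply tc_rec. apply tc_zero. apply tc_proj; lia. }
  eapply tc_ext; [|exact H]. intros v Hv.
  destruct v as [|n [|]]; try discriminate. unfold n0; simpl.
  destruct n; reflexivity.
Qed.

Lemma tc_subr : tc 2 (fun v => n1 v - n0 v)%nat.
Proof.
  assert (H : tc 2 (primrec (fun w => n0 w) (fun v => pred (nth 1 v 0%nat)))).
  { apply tc_rec. apply tc_proj; lia.
    eapply tc_ext; [|apply (tc_app1 3 _ _ tc_pred (tc_proj 3 1 ltac:(lia)))].
    intros; reflexivity. }
  eapply tc_ext; [|exact H]. intros v Hv.
  destruct v as [|n [|m [|]]]; try discriminate. unfold n0, n1; simpl. clear Hv H.
  induction n; simpl; [lia|]. rewrite IHn. lia.
Qed.

Lemma tc_isz : tc 1 (fun v => Nat.b2n (Nat.eqb (n0 v) 0)).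
Proof.
  assert (H : tc 1 (primrec (fun w => 1%nat) (fun v => 0%nat))).
  { apply tc_rec. apply tc_const. apply tc_zero. }
  eapply tc_ext; [|exact H]. intros v Hv.
  destruct v as [|n [|]]; try discriminate. unfold n0; simpl.
  destruct n; reflexivity.
Qed.

Lemma tc_ltb : tc 2 (fun v => Nat.b2n (Nat.ltb (n0 v) (n1 v))).
Proof.
  assert (H : tc 2 (fun v => Nat.b2n (Nat.eqb (S (n0 v) - n1 v) 0))).
  { assert (H1 : tc 2 (fun v => (S (n0 v) - n1 v)%nat)).
    { eapply tc_ext; [|apply (tc_app2 2 _ _ _ tc_subr (tc_proj 2 1 ltac:(lia)) (tc_succ _ _ (tc_proj 2 0 ltac:(lia))))].
      intros; reflexivity. }
    eapply tc_ext; [|apply (tc_app1 2 _ _ tc_isz H1)]. intros; reflexivity. }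
  eapply tc_ext; [|exact H]. intros v _.
  f_equal. destruct (Nat.ltb_spec (n0 v) (n1 v)); destruct (Nat.eqb_spec (S (n0 v) - n1 v) 0); lia.
Qed.

Definition b2 (b : list nat -> bool) := fun v => Nat.b2n (b v).

Lemma tc_negb k B : tc k (b2 B) -> tc k (b2 (fun v => negb (B v))).
Proof.
  intros H. eapply tc_ext; [|apply (tc_app1 k _ _ tc_isz H)].
  intros v _. unfold b2, n0. simpl. destruct (B v); reflexivity.
Qed.

Lemma tc_andb k B1 B2 : tc k (b2 B1) -> tc k (b2 B2) -> tc k (b2 (fun v => B1 v && B2 v)).
Proof.
  intros H1 H2. eapply tc_ext; [|apply (tc_app2 k _ _ _ tc_mul H1 H2)].
  intros v _. unfold b2, n0, n1. simpl. destruct (B1 v), (B2 v); reflexivity.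
Qed.

Lemma tc_orb k B1 B2 : tc k (b2 B1) -> tc k (b2 B2) -> tc k (b2 (fun v => B1 v || B2 v)).
Proof.
  intros H1 H2. apply tc_negb, tc_negb in H1. apply tc_negb, tc_negb in H2.
  eapply tc_ext; [|apply tc_negb, tc_andb; apply tc_negb; [exact H1| exact H2]].
  intros v _. unfold b2. destruct (B1 v), (B2 v); reflexivity.
Qed.

Fixpoint ball_ (g : nat -> bool) (N : nat) : bool :=
  match N with 0 => g 0%nat | S N' => ball_ g N' && g (S N') end.
Fixpoint bex_ (g : nat -> bool) (N : nat) : bool :=
  match N with 0 => g 0%nat | S N' => bex_ g N' || g (S N') end.

Lemma ball_spec g N : ball_ g N = true <-> forall t, (t <= N)%nat -> g t = true.
Proof.
  induction N; simpl.
  - split. intros H t Ht. replace t with 0%nat by lia. exact H. intros H; apply H; lia.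
  - rewrite Bool.andb_true_iff, IHN. split.
    + intros [H1 H2] t Ht. destruct (Nat.eq_dec t (S N)). subst; auto. apply H1; lia.
    + intros H. split. intros; apply H; lia. apply H; lia.
Qed.

Lemma bex_spec g N : bex_ g N = true <-> exists t, (t <= N)%nat /\ g t = true.
Proof.
  induction N; simpl.
  - split. intros H. exists 0%nat. auto. intros [t [Ht H]]. replace t with 0%nat in H by lia. exact H.
  - rewrite Bool.orb_true_iff, IHN. split.
    + intros [[t [Ht H]]|H]. exists t; split; auto; lia. exists (S N); auto.
    + intros [t [Ht H]]. destruct (Nat.eq_dec t (S N)). subst; auto. left. exists t; split; auto; lia.
Qed.

Lemma tc_shift_body k B :
  tc (S k) (b2 B) ->
  tc (S (S k)) (fun v => Nat.b2n (B (S (nth 0 v 0%nat) :: skipn 2 v))).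
Proof.
  intros H.
  assert (H2 := tc_comp (S (S k)) (b2 B)
     ((fun v => S (nth 0 v 0%nat)) :: map (fun i v => nth i v 0%nat) (seq 2 k))).
  simpl in H2. rewrite length_map, length_seq in H2.
  specialize (H2 H (Forall_cons _ (tc_succ _ _ (tc_proj (S (S k)) 0 ltac:(lia))) (Forall_projs k 2))).
  eapply tc_ext; [|exact H2]. intros v Hv. unfold b2. rewrite map_map.
  destruct v as [|i [|z w]]; try discriminate. simpl in Hv.
  simpl. do 3 f_equal. injection Hv as Hv. rewrite <- Hv.
  apply (map_nth_app w [i; z]).
Qed.

Lemma tc_ball k B : tc (S k) (b2 B) ->
  tc (S k) (fun v => Nat.b2n (ball_ (fun t => B (t :: tl v)) (hd 0%nat v))).
Proof.
  intros H.
  assert (Hr : tc (S k) (primrec (fun w => Nat.b2n (B (0%nat :: w)))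
            (fun v => nth 1 v 0%nat * Nat.b2n (B (S (nth 0 v 0%nat) :: skipn 2 v)))%nat)).
  { apply tc_rec.
    - apply (tc_subst1 k (b2 B) (fun _ => 0%nat) H (tc_const _ _)).
    - eapply tc_ext; [|apply (tc_app2 _ _ _ _ tc_mul (tc_proj (S (S k)) 1 ltac:(lia)) (tc_shift_body k B H))].
      intros; reflexivity. }
  eapply tc_ext; [|exact Hr]. intros v Hv.
  destruct v as [|N w]; try discriminate. simpl. clear Hv Hr H.
  induction N; simpl. reflexivity. rewrite IHN. destruct (ball_ _ N); destruct (B (S N :: w)); reflexivity.
Qed.

Lemma tc_bex k B : tc (S k) (b2 B) ->
  tc (S k) (fun v => Nat.b2n (bex_ (fun t => B (t :: tl v)) (hd 0%nat v))).
Proof.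
  intros H.
  assert (Hz : tc (S (S k)) (b2 (fun v => negb (Nat.eqb (nth 1 v 0%nat) 0)))).
  { apply tc_negb. eapply tc_ext; [|apply (tc_app1 _ _ _ tc_isz (tc_proj (S (S k)) 1 ltac:(lia)))].
    intros; reflexivity. }
  assert (Hr : tc (S k) (primrec (fun w => Nat.b2n (B (0%nat :: w)))
            (b2 (fun v => negb (Nat.eqb (nth 1 v 0%nat) 0) || B (S (nth 0 v 0%nat) :: skipn 2 v))))).
  { apply tc_rec.
    - apply (tc_subst1 k (b2 B) (fun _ => 0%nat) H (tc_const _ _)).
    - apply tc_orb. exact Hz. exact (tc_shift_body k B H). }
  eapply tc_ext; [|exact Hr]. intros v Hv.
  destruct v as [|N w]; try discriminate. simpl. clear Hv Hr H Hz.
  induction N; simpl. reflexivity. rewrite IHN. unfold b2. simpl.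
  destruct (bex_ _ N); destruct (B (S N :: w)); reflexivity.
Qed.

Lemma tc_of1 f : computable1 f -> tc 1 (fun v => f (n0 v)).
Proof.
  intros [p Hp]. exists p. intros v Hv. destruct v as [|x [|]]; try discriminate. apply Hp.
Qed.
Lemma tc_of2 f : computable2 f -> tc 2 (fun v => f (n0 v) (n1 v)).
Proof.
  intros [p Hp]. exists p. intros v Hv. destruct v as [|x [|y [|]]]; try discriminate. apply Hp.
Qed.
Lemma tc_of3 f : computable3 f -> tc 3 (fun v => f (n0 v) (n1 v) (nth 2 v 0%nat)).
Proof.
  intros [p Hp]. exists p. intros v Hv. destruct v as [|x [|y [|z [|]]]]; try discriminate. apply Hp.
Qed.

Inductive tm : Type :=
| TV (i : nat) | TC (c : nat) | TAdd (a b : tm) | TMul (a b : tm) | TPow2 (a : tm)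
| TF1 (f : nat -> nat) (a : tm) | TF2 (f : nat -> nat -> nat) (a b : tm)
| TF3 (f : nat -> nat -> nat -> nat) (a b c : tm).

Fixpoint tden (e : list nat) (t : tm) : nat :=
  match t with
  | TV i => nth i e 0%nat | TC c => c
  | TAdd a b => (tden e a + tden e b)%nat
  | TMul a b => (tden e a * tden e b)%nat
  | TPow2 a => (2 ^ tden e a)%nat
  | TF1 f a => f (tden e a)
  | TF2 f a b => f (tden e a) (tden e b)
  | TF3 f a b c => f (tden e a) (tden e b) (tden e c)
  end.

Fixpoint twf (k : nat) (t : tm) : Prop :=
  match t with
  | TV i => (i < k)%nat | TC _ => True
  | TAdd a b => twf k a /\ twf k b
  | TMul a b => twf k a /\ twf k b
  | TPow2 a => twf k a
  | TF1 f a => computable1 f /\ twf k a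
  | TF2 f a b => computable2 f /\ twf k a /\ twf k b
  | TF3 f a b c => computable3 f /\ twf k a /\ twf k b /\ twf k c
  end.

Lemma twf_tc : forall t k, twf k t -> tc k (fun e => tden e t).
Proof.
  induction t; intros k H; simpl in *.
  - apply tc_proj; exact H.
  - apply tc_const.
  - destruct H. eapply tc_ext; [|apply (tc_app2 _ _ _ _ tc_add (IHt1 _ H) (IHt2 _ H0))]. intros; reflexivity.
  - destruct H. eapply tc_ext; [|apply (tc_app2 _ _ _ _ tc_mul (IHt1 _ H) (IHt2 _ H0))]. intros; reflexivity.
  - eapply tc_ext; [|apply (tc_app1 _ _ _ tc_pow2 (IHt _ H))]. intros; reflexivity.
  - destruct H. eapply tc_ext; [|apply (tc_app1 _ _ _ (tc_of1 _ H) (IHt _ H0))]. intros; reflexivity.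
  - destruct H as [? [? ?]]. eapply tc_ext; [|apply (tc_app2 _ _ _ _ (tc_of2 _ H) (IHt1 _ H0) (IHt2 _ H1))]. intros; reflexivity.
  - destruct H as [? [? [? ?]]]. eapply tc_ext; [|apply (tc_app3 _ _ _ _ _ (tc_of3 _ H) (IHt1 _ H0) (IHt2 _ H1) (IHt3 _ H2))]. intros; reflexivity.
Qed.

Inductive fm : Type :=
| FLt (a b : tm) | FAnd (p q : fm) | FOr (p q : fm) | FNot (p : fm)
| FTrue | FFalse | FAll (b : tm) (p : fm) | FEx (b : tm) (p : fm).

Fixpoint fden (e : list nat) (p : fm) : bool :=
  match p with
  | FLt a b => Nat.ltb (tden e a) (tden e b)
  | FAnd p q => fden e p && fden e q
  | FOr p q => fden e p || fden e q
  | FNot p => negb (fden e p)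
  | FTrue => true | FFalse => false
  | FAll b p => ball_ (fun t => fden (t :: e) p) (tden e b)
  | FEx b p => bex_ (fun t => fden (t :: e) p) (tden e b)
  end.

Fixpoint fwf (k : nat) (p : fm) : Prop :=
  match p with
  | FLt a b => twf k a /\ twf k b
  | FAnd p q => fwf k p /\ fwf k q
  | FOr p q => fwf k p /\ fwf k q
  | FNot p => fwf k p
  | FTrue => True | FFalse => True
  | FAll b p => twf k b /\ fwf (S k) p
  | FEx b p => twf k b /\ fwf (S k) p
  end.

Lemma fwf_tc : forall p k, fwf k p -> tc k (b2 (fun e => fden e p)).
Proof.
  induction p; intros k H; simpl in *.
  - destruct H. eapply tc_ext; [|apply (tc_app2 _ _ _ _ tc_ltb (twf_tc _ _ H) (twf_tc _ _ H0))]. intros; reflexivity.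
  - destruct H. apply tc_andb; auto.
  - destruct H. apply tc_orb; auto.
  - apply tc_negb; auto.
  - apply tc_const.
  - apply tc_const.
  - destruct H. assert (H1 := tc_subst1 _ _ _ (tc_ball k _ (IHp _ H0)) (twf_tc _ _ H)).
    eapply tc_ext; [|exact H1]. intros; reflexivity.
  - destruct H. assert (H1 := tc_subst1 _ _ _ (tc_bex k _ (IHp _ H0)) (twf_tc _ _ H)).
    eapply tc_ext; [|exact H1]. intros; reflexivity.
Qed.

Lemma least_true (P : nat -> bool) n : P n = true ->
  exists m, P m = true /\ forall k, (k < m)%nat -> P k = false.
Proof.
  revert P. induction n; intros P H.
  - exists 0%nat. split; auto. intros; lia.
  - destruct (P 0%nat) eqn:E.
    + exists 0%nat. split; auto. intros; lia.
    + destruct (IHn (fun k => P (S k)) H) as [m [Hm Hl]].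
      exists (S m). split; auto. intros [|k] Hk; auto. apply Hl. lia.
Qed.

Lemma ce_of_fm p : fwf 2 p -> c_e (fun x => exists M, fden [M; x] p = true).
Proof.
  intros H. apply (fwf_tc (FNot p)) in H. destruct H as [pn Hpn].
  exists (PMu pn). intros x. split.
  - intros [M HM]. destruct (least_true (fun M => fden [M; x] p) M HM) as [m [Hm Hl]].
    exists m. constructor.
    + specialize (Hpn [m; x] eq_refl). unfold b2 in Hpn. simpl in Hpn. rewrite Hm in Hpn. exact Hpn.
    + intros k Hk. exists 0%nat. specialize (Hpn [k; x] eq_refl). unfold b2 in Hpn. simpl in Hpn.
      rewrite Hl in Hpn by exact Hk. exact Hpn.
  - intros [y Hy]. exists y. inversion Hy; subst.
    specialize (Hpn [y; x] eq_refl). pose proof (eval_det _ _ _ Hpn _ H0) as E.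
    unfold b2 in E. simpl in E. destruct (fden [y; x] p); [reflexivity|discriminate].
Qed.

Open Scope R_scope.

Lemma Q2R_qcode a b c : Q2R (qcode a b c) = (INR a - INR b) / (INR c + 1).
Proof.
  unfold Q2R, qcode. simpl. rewrite minus_IZR, <- !INR_IZR_INZ.
  rewrite Znat.Zpos_P_of_succ_nat, succ_IZR, <- INR_IZR_INZ. reflexivity.
Qed.

Lemma test_real a b c a' b' c' M :
  (a * (c' + 1) * 2 ^ M + 2 * (c + 1) * (c' + 1) + b' * (c + 1) * 2 ^ M <
   a' * (c + 1) * 2 ^ M + b * (c' + 1) * 2 ^ M)%nat <->
  Q2R (qcode a b c) + 2 / 2 ^ M < Q2R (qcode a' b' c').
Proof.
  rewrite !Q2R_qcode.
  assert (HC : 0 < INR c + 1) by (pose proof (pos_INR c); lra).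
  assert (HC' : 0 < INR c' + 1) by (pose proof (pos_INR c'); lra).
  assert (HP : 0 < 2 ^ M) by (apply pow_lt; lra).
  set (C := INR c + 1) in *. set (C' := INR c' + 1) in *. set (P := 2 ^ M) in *.
  assert (E : forall x y : nat, (x < y)%nat <-> INR x < INR y).
  { intros; split; [apply lt_INR | apply INR_lt]. }
  rewrite E. rewrite !plus_INR, !mult_INR, !pow_INR, !plus_INR. simpl (INR 1). simpl (INR 2).
  replace (1 + 1) with 2 by ring. fold P. fold C C'.
  assert (Key : (INR a * C' * P + 2 * C * C' + INR b' * C * P) - (INR a' * C * P + INR b * C' * P)
     = (C * C' * P) * ((INR a - INR b) / C + 2 / P - (INR a' - INR b') / C')).
  { field. lra. }
  assert (HD : 0 < C * C' * P) by (apply Rmult_lt_0_compat; [apply Rmult_lt_0_compat|]; lra).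
  set (L := INR a * C' * P + 2 * C * C' + INR b' * C * P) in *.
  set (R0 := INR a' * C * P + INR b * C' * P) in *.
  set (Ex := (INR a - INR b) / C + 2 / P - (INR a' - INR b') / C') in *.
  split; intros H.
  - assert (Ex < 0) by nra. unfold Ex in *. lra.
  - assert (Ex < 0) by (unfold Ex; lra). nra.
Qed.

Lemma pow2_gt n : INR n < 2 ^ n.
Proof.
  induction n. simpl. lra. rewrite S_INR. simpl.
  assert (1 <= 2 ^ n) by (apply pow_R1_Rle; lra). lra.
Qed.

Lemma pow2_small eps : 0 < eps -> exists P, / 2 ^ P < eps.
Proof.
  intros H. destruct (archimed_cor1 eps H) as [N [HN HN0]]. exists N.
  apply Rle_lt_trans with (/ INR N); auto. apply Rlt_le, Rinv_lt_contravar.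
  apply Rmult_lt_0_compat. apply lt_0_INR; lia. apply pow_lt; lra. apply pow2_gt.
Qed.

Lemma pow2_anti a b : (a <= b)%nat -> / 2 ^ b <= / 2 ^ a.
Proof.
  intros H. apply Rinv_le_contravar. apply pow_lt; lra. apply Rle_pow; [lra|exact H].
Qed.

Lemma pow2_plus2 P : / 2 ^ P = 4 * / 2 ^ (P + 2).
Proof.
  rewrite pow_add. simpl. assert (2 ^ P <> 0) by (apply pow_nonzero; lra). field. auto.
Qed.

Lemma pow2_pos P : 0 < / 2 ^ P.
Proof. apply Rinv_0_lt_compat, pow_lt; lra. Qed.

Definition testf (ga gb gc : nat -> nat -> nat -> nat) (qa qb qc tau1 tau2 : nat -> nat)
  (u m M : tm) : fm :=
  let a := TF3 ga u (TF1 tau1 m) M in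
  let b := TF3 gb u (TF1 tau1 m) M in
  let c := TF3 gc u (TF1 tau1 m) M in
  let a' := TF1 qa (TF1 tau2 m) in
  let b' := TF1 qb (TF1 tau2 m) in
  let c' := TF1 qc (TF1 tau2 m) in
  let P := TPow2 M in
  FLt (TAdd (TAdd (TMul (TMul a (TAdd c' (TC 1))) P)
                  (TMul (TMul (TC 2) (TAdd c (TC 1))) (TAdd c' (TC 1))))
            (TMul (TMul b' (TAdd c (TC 1))) P))
      (TAdd (TMul (TMul a' (TAdd c (TC 1))) P) (TMul (TMul b (TAdd c' (TC 1))) P)).

Lemma testf_sem ga gb gc qa qb qc tau1 tau2 e u m M :
  fden e (testf ga gb gc qa qb qc tau1 tau2 u m M) = true <->
  Q2R (qcode (ga (tden e u) (tau1 (tden e m)) (tden e M))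
             (gb (tden e u) (tau1 (tden e m)) (tden e M))
             (gc (tden e u) (tau1 (tden e m)) (tden e M))) + 2 / 2 ^ (tden e M)
  < Q2R (qcode (qa (tau2 (tden e m))) (qb (tau2 (tden e m))) (qc (tau2 (tden e m)))).
Proof.
  rewrite <- test_real. unfold testf. simpl fden. rewrite Nat.ltb_lt. simpl tden. reflexivity.
Qed.

Lemma testf_wf ga gb gc qa qb qc tau1 tau2 k u m M :
  computable3 ga -> computable3 gb -> computable3 gc ->
  computable1 qa -> computable1 qb -> computable1 qc ->
  computable1 tau1 -> computable1 tau2 -> twf k u -> twf k m -> twf k M ->
  fwf k (testf ga gb gc qa qb qc tau1 tau2 u m M).
Proof. intros. simpl. tauto. Qed.

Definition body1 ga gb gc qa qb qc tau1 tau2 sigma eta (f : nat -> nat) : fm :=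
  FAll (TF1 eta (TF1 f (TV 0)))
    (FEx (TF1 eta (TV 2))
       (testf ga gb gc qa qb qc tau1 tau2 (TF2 sigma (TF1 f (TV 2)) (TV 1))
              (TF2 sigma (TV 3) (TV 0)) (TV 2))).

Definition body2 ga gb gc qa qb qc tau1 tau2 sigma eta (f : nat -> nat) : fm :=
  FEx (TF1 eta (TF1 f (TV 0)))
    (testf ga gb gc qa qb qc tau1 tau2 (TF2 sigma (TF1 f (TV 1)) (TV 0)) (TV 2) (TV 1)).

Fixpoint conj1 (B : nat -> fm) (m : nat) : fm :=
  match m with 0%nat => FTrue | S m' => FAnd (conj1 B m') (B (S m')) end.
Fixpoint disj2 (B : nat -> fm) (m : nat) : fm :=
  match m with 0%nat => FFalse | S m' => FOr (disj2 B m') (B (S m')) end.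

Lemma conj1_sem B m e : fden e (conj1 B m) = true <->
  forall i, (1 <= i <= m)%nat -> fden e (B i) = true.
Proof.
  induction m; simpl.
  - split; auto. intros _ i Hi; lia.
  - rewrite Bool.andb_true_iff, IHm. split.
    + intros [H1 H2] i Hi. destruct (Nat.eq_dec i (S m)). subst; auto. apply H1; lia.
    + intros H; split. intros; apply H; lia. apply H; lia.
Qed.

Lemma disj2_sem B m e : fden e (disj2 B m) = true <->
  exists i, (1 <= i <= m)%nat /\ fden e (B i) = true.
Proof.
  induction m; simpl.
  - split. discriminate. intros [i [Hi _]]; lia.
  - rewrite Bool.orb_true_iff, IHm. split.
    + intros [[i [Hi H]]|H]. exists i; split; auto; lia. exists (S m); split; auto; lia.
    + intros [i [Hi H]]. destruct (Nat.eq_dec i (S m)). subst; auto. left; exists i; split; auto; lia.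
Qed.

Lemma conj1_wf B m k : (forall i, (1 <= i <= m)%nat -> fwf k (B i)) -> fwf k (conj1 B m).
Proof. induction m; simpl; auto. intros H. split. apply IHm; intros; apply H; lia. apply H; lia. Qed.
Lemma disj2_wf B m k : (forall i, (1 <= i <= m)%nat -> fwf k (B i)) -> fwf k (disj2 B m).
Proof. induction m; simpl; auto. intros H. split. apply IHm; intros; apply H; lia. apply H; lia. Qed.

Lemma c_e_ext (P Q : nat -> Prop) : (forall x, P x <-> Q x) -> c_e P -> c_e Q.
Proof. intros H [p Hp]. exists p. intros x. rewrite <- H. apply Hp. Qed.

Lemma max_in_list (l : list (nat * nat)) :
  forall s p, In (s, p) l -> (p <= fold_right (fun sp acc => Nat.max (snd sp) acc) 0%nat l)%nat.
Proof.
  induction l as [|[s0 p0] l IH]; simpl; [tauto|].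
  intros s p [H|H]. injection H as -> ->. lia. specialize (IH _ _ H). lia.
Qed.

Theorem proposition4p2 (X : Type) (d : X -> X -> R) (alpha : nat -> X)
  (q : nat -> Q) (tau1 tau2 : nat -> nat) (sigma : nat -> nat -> nat)
  (eta : nat -> nat)
  (Hcms : computable_metric_space d alpha)
  (Henum : enum_data q tau1 tau2 sigma eta)
  (S : X -> Prop) (HS : compact_set d S)
  (n : nat) (A : nat -> X -> Prop)
  (HAS : forall i, (1 <= i <= n)%nat -> forall x, A i x -> S x)
  (Hcover : forall x, S x -> exists i, (1 <= i <= n)%nat /\ A i x)
  (Hcomp : forall i, (1 <= i <= n)%nat -> computable_up_to d alpha sigma eta (A i) S) :
  computable_compact d alpha q tau1 tau2 sigma eta S.
Proof.
  destruct Hcms as [[Hd0 [Hdeq [Hsym Htri]]] [_ [ga [gb [gc [Hga [Hgb [Hgc Happ]]]]]]]].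
  destruct Henum as [[qa [qb [qc [Hqa [Hqb [Hqc Hq]]]]]] [_ [_ [Ht1 [Ht2 [_ [Hsig [Heta _]]]]]]]].
  assert (HF : forall i, exists f : nat -> nat, (1 <= i <= n)%nat -> computable1 f /\
     forall k, prec d (/ 2 ^ k) (A i) (Lambda alpha sigma eta (f k)) /\
               prec d (/ 2 ^ k) (Lambda alpha sigma eta (f k)) S).
  { intros i. destruct (le_dec 1 i); [destruct (le_dec i n)|].
    - destruct (Hcomp i ltac:(lia)) as [f Hf]. exists f; auto.
    - exists (fun _ => 0%nat). intros; lia.
    - exists (fun _ => 0%nat). intros; lia. }
  set (F := fun i => proj1_sig (constructive_indefinite_description _ (HF i))).
  assert (HFs : forall i, (1 <= i <= n)%nat -> computable1 (F i) /\
     forall k, prec d (/ 2 ^ k) (A i) (Lambda alpha sigma eta (F i k)) /\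
               prec d (/ 2 ^ k) (Lambda alpha sigma eta (F i k)) S).
  { intros i Hi. exact (proj2_sig (constructive_indefinite_description _ (HF i)) Hi). }
  clearbody F. clear HF.
  set (Gv := fun u v M => Q2R (qcode (ga u v M) (gb u v M) (gc u v M))).
  set (rh := fun m => Q2R (q (tau2 m))).
  assert (Hrh : forall m, rh m = Q2R (qcode (qa (tau2 m)) (qb (tau2 m)) (qc (tau2 m)))).
  { intros m. apply Qeq_eqR, Hq. }
  assert (Happ' : forall u v M, Rabs (d (alpha u) (alpha v) - Gv u v M) < / 2 ^ M) by exact Happ.
  clear Happ.
  assert (Hb1 : forall f M j, fden [M; j] (body1 ga gb gc qa qb qc tau1 tau2 sigma eta f) = true <->
     forall t, (t <= eta (f M))%nat -> exists s, (s <= eta j)%nat /\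
        Gv (sigma (f M) t) (tau1 (sigma j s)) M + 2 / 2 ^ M < rh (sigma j s)).
  { intros f M j. unfold body1. cbn [fden tden nth]. rewrite ball_spec.
    split; intros H t Ht; specialize (H t Ht).
    - apply bex_spec in H. destruct H as [s [Hs H]]. exists s. split; auto.
      apply testf_sem in H. cbn [tden nth] in H. rewrite Hrh. exact H.
    - apply bex_spec. destruct H as [s [Hs H]]. exists s. split; auto.
      apply testf_sem. cbn [tden nth]. rewrite <- Hrh. exact H. }
  assert (Hb2 : forall f M x, fden [M; x] (body2 ga gb gc qa qb qc tau1 tau2 sigma eta f) = true <->
     exists t, (t <= eta (f M))%nat /\
        Gv (sigma (f M) t) (tau1 x) M + 2 / 2 ^ M < rh x).
  { intros f M x. unfold body2. cbn [fden tden nth]. rewrite bex_spec.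
    split; intros [t [Ht H]]; exists t; split; auto.
    - apply testf_sem in H. cbn [tden nth] in H. rewrite Hrh. exact H.
    - apply testf_sem. cbn [tden nth]. rewrite <- Hrh. exact H. }
  assert (Hwf1 : forall i, (1 <= i <= n)%nat -> fwf 2 (body1 ga gb gc qa qb qc tau1 tau2 sigma eta (F i))).
  { intros i Hi. destruct (HFs i Hi) as [Hc _]. unfold body1, testf. simpl. repeat split; auto; lia. }
  assert (Hwf2 : forall i, (1 <= i <= n)%nat -> fwf 2 (body2 ga gb gc qa qb qc tau1 tau2 sigma eta (F i))).
  { intros i Hi. destruct (HFs i Hi) as [Hc _]. unfold body2, testf. simpl. repeat split; auto; lia. }
  split; [exact HS|split].
  -
    set (B := fun i => body1 ga gb gc qa qb qc tau1 tau2 sigma eta (F i)).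
    apply (c_e_ext (fun j => exists M, fden [M; j] (conj1 B n) = true)).
    2:{ apply ce_of_fm. apply conj1_wf. exact Hwf1. }
    intros j. split.
    + intros [M HM] x Sx. rewrite conj1_sem in HM.
      destruct (Hcover x Sx) as [i [Hi Ax]].
      specialize (HM i Hi). unfold B in HM. rewrite Hb1 in HM.
      destruct (HFs i Hi) as [_ Hk]. destruct (Hk M) as [Hp1 _].
      destruct (Hp1 x Ax) as [b [[m0 [[t [Ht Hm0]] ->]] Hxb]].
      destruct (HM t Ht) as [s [Hs Htest]].
      exists (sigma j s). split. exists s; auto.
      unfold Iball, ball, lam, rho. change (Q2R (q (tau2 (sigma j s)))) with (rh (sigma j s)).
      specialize (Happ' m0 (tau1 (sigma j s)) M). subst m0.
      pose proof (Htri (alpha (tau1 (sigma j s))) (alpha (sigma (F i M) t)) x).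
      rewrite (Hsym (alpha (tau1 (sigma j s))) (alpha (sigma (F i M) t))) in H.
      rewrite (Hsym (alpha (sigma (F i M) t)) x) in H.
      apply Rabs_def2 in Happ'. destruct Happ'.
      unfold Rdiv in Htest. lra.
    + intros HJ.
      set (U := fun (sp : nat * nat) x =>
         (fst sp <= eta j)%nat /\
         d (alpha (tau1 (sigma j (fst sp)))) x + / 2 ^ (snd sp) < rh (sigma j (fst sp))).
      destruct (HS (nat * nat)%type U) as [l Hl].
      * intros [s p] x [Hs Hx]. simpl in *.
        exists (rh (sigma j s) - / 2 ^ p - d (alpha (tau1 (sigma j s))) x). split. lra.
        intros y Hy. unfold ball in Hy. split; auto. simpl.
        pose proof (Htri (alpha (tau1 (sigma j s))) x y). lra.
      * intros x Sx. destruct (HJ x Sx) as [m [[s [Hs <-]] Hb]].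
        unfold Iball, ball, lam, rho in Hb. change (Q2R (q (tau2 (sigma j s)))) with (rh (sigma j s)) in Hb.
        destruct (pow2_small (rh (sigma j s) - d (alpha (tau1 (sigma j s))) x)) as [P HP]. lra.
        exists (s, P). split; simpl; auto. lra.
      * set (Pm := fold_right (fun sp acc => Nat.max (snd sp) acc) 0%nat l).
        exists (Pm + 2)%nat. apply conj1_sem. intros i Hi. unfold B. apply Hb1.
        intros t Ht.
        destruct (HFs i Hi) as [_ Hk]. destruct (Hk (Pm + 2)%nat) as [_ Hp2].
        destruct (Hp2 (alpha (sigma (F i (Pm + 2)%nat) t))) as [y [Sy Hy]].
        { exists (sigma (F i (Pm + 2)%nat) t). split; auto. exists t; auto. }
        destruct (Hl y Sy) as [[s p] [Hin [Hs HU]]]. simpl in Hs, HU.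
        exists s. split; auto.
        pose proof (max_in_list l s p Hin) as Hpm. fold Pm in Hpm.
        pose proof (pow2_anti _ _ Hpm) as Hpa. rewrite pow2_plus2 in Hpa.
        specialize (Happ' (sigma (F i (Pm + 2)%nat) t) (tau1 (sigma j s)) (Pm + 2)%nat).
        apply Rabs_def2 in Happ'. destruct Happ'.
        pose proof (Htri (alpha (sigma (F i (Pm + 2)%nat) t)) y (alpha (tau1 (sigma j s)))).
        rewrite (Hsym y) in H1.
        unfold Rdiv. lra.
  -
    set (B := fun i => body2 ga gb gc qa qb qc tau1 tau2 sigma eta (F i)).
    apply (c_e_ext (fun x => exists M, fden [M; x] (disj2 B n) = true)).
    2:{ apply ce_of_fm. apply disj2_wf. exact Hwf2. }
    intros x. split.
    + intros [M HM]. rewrite disj2_sem in HM. destruct HM as [i [Hi HM]].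
      unfold B in HM. rewrite Hb2 in HM. destruct HM as [t [Ht Htest]].
      destruct (HFs i Hi) as [_ Hk]. destruct (Hk M) as [_ Hp2].
      destruct (Hp2 (alpha (sigma (F i M) t))) as [y [Sy Hy]].
      { exists (sigma (F i M) t). split; auto. exists t; auto. }
      exists y. split; auto.
      unfold Iball, ball, lam, rho. change (Q2R (q (tau2 x))) with (rh x).
      specialize (Happ' (sigma (F i M) t) (tau1 x) M).
      apply Rabs_def2 in Happ'. destruct Happ'.
      pose proof (Htri (alpha (tau1 x)) (alpha (sigma (F i M) t)) y).
      rewrite (Hsym (alpha (tau1 x)) (alpha (sigma (F i M) t))) in H1.
      unfold Rdiv in Htest. lra.
    + intros [y [Sy Hb]].
      unfold Iball, ball, lam, rho in Hb. change (Q2R (q (tau2 x))) with (rh x) in Hb.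
      destruct (pow2_small (rh x - d (alpha (tau1 x)) y)) as [P HP]. lra.
      exists (P + 2)%nat. apply disj2_sem.
      destruct (Hcover y Sy) as [i [Hi Ay]].
      exists i. split; auto. unfold B. apply Hb2.
      destruct (HFs i Hi) as [_ Hk]. destruct (Hk (P + 2)%nat) as [Hp1 _].
      destruct (Hp1 y Ay) as [b [[m0 [[t [Ht Hm0]] ->]] Hyb]].
      exists t. split; auto. subst m0.
      rewrite pow2_plus2 in HP.
      specialize (Happ' (sigma (F i (P + 2)%nat) t) (tau1 x) (P + 2)%nat).
      apply Rabs_def2 in Happ'. destruct Happ'.
      pose proof (Htri (alpha (sigma (F i (P + 2)%nat) t)) y (alpha (tau1 x))).
      rewrite (Hsym (alpha (sigma (F i (P + 2)%nat) t)) y) in H1.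
      rewrite (Hsym y (alpha (tau1 x))) in H1.
      unfold Rdiv. lra.
Qed.
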